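(* Assume the standing hypotheses described in the context and that $\ell_1(x,\cdot)$ is positively $1$-homogeneous for every $x$ (so that $\ell^e(x,w^0,w,a)=\ell_0(x,a)w^0+\ell_1(x,w)$). Let $(\bar S,\bar w^0,\bar w,\bar\alpha,\bar y^0,\bar y,\bar\beta)$ be a canonical extremal with multiplier $(p_0,p,\pi,\lambda)$. Then there is a zero-measure set $\mathcal N\subset[0,\bar S]$ such that for every $s\in[0,\bar S]\setminus\mathcal N$: $H(\bar y(s),p_0,p(s),\pi,\lambda,\bar w^0(s),\bar w(s),\bar\alpha(s))=\mathbf H(\bar y(s),p_0,p(s),\pi,\lambda)=\max\{\mathbf H^{(dr)}(\bar y(s),p_0,p(s),\lambda),\mathbf H^{(imp)}(\bar y(s),p(s),\pi,\lambda)\}=0$; $\bar w^0(s)\big[p_0+p(s)\cdot f(\bar y(s),\bar\alpha(s))-\lambda\ell_0(\bar y(s),\bar\alpha(s))\big]=0$; $p(s)\cdot\sum_{i=1}^m g_i(\bar y(s))\bar w^i(s)+\pi|\bar w(s)|-\lambda\ell_1(\bar y(s),\bar w(s))=0$. In particular, for $s\in[0,\bar S]\setminus\mathcal N$: (i) if $\mathbf H^{(dr)}(\bar y(s),p_0,p(s),\lambda)<0$, then $\bar w^0(s)=0$ and $p(s)\cdot\sum_{i=1}^m g_i(\bar y(s))\bar w^i(s)+\pi-\lambda\ell_1(\bar y(s),\bar w(s))=\mathbf H^{(imp)}(\bar y(s),p(s),\pi,\lambda)=0$; (ii) if $\mathbf H^{(imp)}(\bar y(s),p(s),\pi,\lambda)<0$,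 then $\bar w(s)=0$ and $p_0+p(s)\cdot f(\bar y(s),\bar\alpha(s))-\lambda\ell_0(\bar y(s),\bar\alpha(s))=\mathbf H^{(dr)}(\bar y(s),p_0,p(s),\lambda)=0$.
   Context: Let $n,m,q\ge1$, $m=m_1+m_2$. Standing hypotheses: $\mathfrak T\subset\mathbb{R}_+\times\mathbb{R}^n$ closed target; $A\subset\mathbb{R}^q$ compact; $\mathcal C=\mathcal C_1\times\mathcal C_2\subseteq\mathbb{R}^m$ with $\mathcal C_1\subseteq\mathbb{R}^{m_1}$ a closed cone containing the lines $\mathbb{R}\mathbf e_i$, $i\le m_1$, and $\mathcal C_2\subseteq\mathbb{R}^{m_2}$ a closed cone containing no line; $f:\mathbb{R}^n\times A\to\mathbb{R}^n$ continuous with continuous $x$-partials; $g_1,\dots,g_m$ of class $C^1$; $\ell(x,u,a)=\ell_0(x,a)+\ell_1(x,u)$ with $\ell_0$ and the recession function $\hat\ell_1(x,w^0,w):=\lim_{r\to w^0}r\ell_1(x,w/r)$ continuous with continuous $x$-partials; $\Psi:\mathbb{R}\times\mathbb{R}^n\to\mathbb{R}$ of class $C^1$; $K\in(0,+\infty]$, $\check x\in\mathbb{R}^n$; $\ell^e(x,w^0,w,a):=\ell_0(x,a)w^0+\hat\ell_1(x,w^0,w)$. A space-time process is $(S,w^0,w,\alpha,y^0,y,\beta)$ with $S>0$, $(w^0,w,\alpha)\in L^\infty([0,S],\mathbb{R}_+\times\mathcal C\times A)$, $\operatorname{ess\,inf}(w^0+|w|)>0$, and $(y^0,y,\beta)$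 solving $\dot y^0=w^0$, $\dot y=f(y,\alpha)w^0+\sum_i g_i(y)w^i$, $\dot\beta=|w|$, $(y^0,y,\beta)(0)=(0,\check x,0)$; it is canonical if $w^0+|w|=1$ a.e. Hamiltonians: $W=\{(w^0,w)\in\mathbb{R}_+\times\mathcal C:w^0+|w|=1\}$; $H(x,p_0,p,\pi,\lambda,w^0,w,a)=p_0w^0+p\cdot(f(x,a)w^0+\sum_i g_i(x)w^i)+\pi|w|-\lambda\ell^e(x,w^0,w,a)$; $\mathbf H=\max_{W\times A}H$; $\mathbf H^{(dr)}(x,p_0,p,\lambda):=\max_{a\in A}\{p_0+p\cdot f(x,a)-\lambda\ell_0(x,a)\}$; $\mathbf H^{(imp)}(x,p,\pi,\lambda):=\max_{w\in\mathcal C,|w|=1}\{p\cdot\sum_i g_i(x)w^i+\pi-\lambda\ell_1(x,w)\}$. Extremal: a space-time process $(\bar S,\bar w^0,\bar w,\bar\alpha,\bar y^0,\bar y,\bar\beta)$ together with (for some Boltyanski approximating cone $\Gamma$ of $\mathfrak T$ at $(\bar y^0,\bar y)(\bar S)$) a multiplier $(p_0,p,\pi,\lambda)\in\mathbb{R}\times AC([0,\bar S],\mathbb{R}^n)\times(-\infty,0]\times[0,\infty)$ satisfying: $(p_0,p,\lambda)\ne(0,0,0)$; $(p_0,p(\bar S))\in-\lambda\nabla_{(t,x)}\Psi((\bar y^0,\bar y)(\bar S))-\Gamma^\perp$, with $\pi=0$ if $\bar\beta(\bar S)<K$; $\dot p=-\partial_xH(\bar y,p_0,p,\pi,\lambda,\bar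 w^0,\bar w,\bar\alpha)$ a.e.; $H(\bar y,p_0,p,\pi,\lambda,\bar w^0,\bar w,\bar\alpha)=\mathbf H(\bar y,p_0,p,\pi,\lambda)$ a.e.; and $\mathbf H(\bar y(s),p_0,p(s),\pi,\lambda)=0$ for all $s\in[0,\bar S]$. (A Boltyanski approximating cone of $Z\subseteq\mathbb{R}^N$ at $z$ is a convex cone $LC$, where $C\subset\mathbb{R}^M$ is a convex cone, $L$ linear, and there is a continuous $F:V\cap C\to Z$, $V$ a neighborhood of $0$, with $F(v)=z+Lv+o(|v|)$; $X^\perp=\{p:p\cdot x\le0\ \forall x\in X\}$.) *)

(* Defs.v *)
From HB Require Import structures.
From mathcomp Require Import all_boot all_order all_algebra.
From mathcomp Require Import all_classical all_reals all_analysis.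
Set Implicit Arguments. Unset Strict Implicit. Unset Printing Implicit Defensive.
Import Order.TTheory GRing.Theory Num.Theory numFieldNormedType.Exports.
Local Open Scope classical_set_scope.
Local Open Scope ring_scope.

Section Defs.
Variable R : realType.

Definition evec (k : nat) (j : 'I_k) : 'rV[R]_k := delta_mx 0 j.

Definition dotp (k : nat) (u v : 'rV[R]_k) : R := \sum_(i < k) u 0 i * v 0 i.
Definition enorm (k : nat) (v : 'rV[R]_k) : R := Num.sqrt (dotp v v).

(* the point (t,x) of R x R^n, coded as a row vector of R^(1+n) *)
Definition pack (n : nat) (t : R) (x : 'rV[R]_n) : 'rV[R]_(1 + n) :=
  row_mx (t%:M) x.

Definition is_cone (k : nat) (K : set 'rV[R]_k) : Prop :=
  K 0 /\ forall r v, 0 <= r -> K v -> K (r *: v).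
Definition is_convex_cone (k : nat) (K : set 'rV[R]_k) : Prop :=
  is_cone K /\ forall u v, K u -> K v -> K (u + v).

Definition C1fun (k : nat) (W : normedModType R) (h : 'rV[R]_k -> W) : Prop :=
  forall j : 'I_k, (forall x, derivable h x (evec j)) /\
    continuous (fun x => 'D_(evec j) h x).

Definition cont_xpartials (k : nat) (Y : topologicalType) (W : normedModType R)
  (D : set ('rV[R]_k * Y)) (h : 'rV[R]_k -> Y -> W) : Prop :=
  forall j : 'I_k, (forall z, D z -> derivable (h^~ z.2) z.1 (evec j)) /\
    {within D, continuous (fun z => 'D_(evec j) (h^~ z.2) z.1)}.

Definition grad (k : nat) (h : 'rV[R]_k -> R) (x : 'rV[R]_k) : 'rV[R]_k :=
  \row_(j < k) 'D_(evec j) h x.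

Definition polar (k : nat) (X : set 'rV[R]_k) : set 'rV[R]_k :=
  [set p | forall x, X x -> dotp p x <= 0].

Definition boltyanski_cone (N : nat) (Z : set 'rV[R]_N) (z : 'rV[R]_N)
  (G : set 'rV[R]_N) : Prop :=
  exists (M : nat) (Cc : set 'rV[R]_M) (L : 'M[R]_(M, N)) (V : set 'rV[R]_M)
         (F : 'rV[R]_M -> 'rV[R]_N),
    [/\ is_convex_cone Cc, G = [set v *m L | v in Cc], is_convex_cone G,
        nbhs (0 : 'rV[R]_M) V &
     [/\ {within V `&` Cc, continuous F},
         (forall v, V v -> Cc v -> Z (F v)) &
         forall eps : R, 0 < eps -> exists2 delta : R, 0 < delta &
           forall v, V v -> Cc v -> `|v| < delta ->
             `|F v - z - v *m L| <= eps * `|v| ]].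

Definition leb_null (N : set R) : Prop :=
  measurable N /\ (@lebesgue_measure R) N = 0%E.
Definition ae_on (S : R) (P : R -> Prop) : Prop :=
  exists N, leb_null N /\ forall s, `[0, S]%classic s -> ~ N s -> P s.

Definition abs_cont (V : normedModType R) (S : R) (u : R -> V) : Prop :=
  forall eps : R, 0 < eps -> exists2 delta : R, 0 < delta &
    forall (k : nat) (a b : 'I_k -> R),
      (forall i, 0 <= a i /\ a i <= b i /\ b i <= S) ->
      (forall i j, i != j -> b i <= a j \/ b j <= a i) ->
      \sum_(i < k) (b i - a i) < delta ->
      \sum_(i < k) `|u (b i) - u (a i)| < eps.

Definition AC_sol (V : normedModType R) (S : R) (u du : R -> V) : Prop :=
  abs_cont S u /\ ae_on S (fun s => 0 < s < S /\ is_derive s 1 u (du s)).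

Definition ess_bounded (V : normedModType R) (S : R) (u : R -> V) : Prop :=
  exists M : R, ae_on S (fun s => `|u s| <= M).

Definition meas_vec (k : nat) (S : R) (u : R -> 'rV[R]_k) : Prop :=
  forall i : 'I_k, measurable_fun `[0, S]%classic (fun s => u s 0 i).

End Defs.

Section Hamiltonians.
Variables (R : realType) (n m1 m2 q : nat).
Local Notation m := (m1 + m2)%N.
Variables (C1 : set 'rV[R]_m1) (C2 : set 'rV[R]_m2) (A : set 'rV[R]_q).
Variables (f : 'rV[R]_n -> 'rV[R]_q -> 'rV[R]_n) (g : 'I_m -> 'rV[R]_n -> 'rV[R]_n)
  (l0 : 'rV[R]_n -> 'rV[R]_q -> R) (l1 : 'rV[R]_n -> 'rV[R]_m -> R)
  (l1hat : 'rV[R]_n -> R -> 'rV[R]_m -> R).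

Definition Ccone : set 'rV[R]_m := [set w | C1 (lsubmx w) /\ C2 (rsubmx w)].

Definition gsum (x : 'rV[R]_n) (w : 'rV[R]_m) : 'rV[R]_n :=
  \sum_(i < m) w 0 i *: g i x.

Definition le (x : 'rV[R]_n) (w0 : R) (w : 'rV[R]_m) (a : 'rV[R]_q) : R :=
  l0 x a * w0 + l1hat x w0 w.

Definition Hfun (x : 'rV[R]_n) (p0 : R) (p : 'rV[R]_n) (pi lam w0 : R)
  (w : 'rV[R]_m) (a : 'rV[R]_q) : R :=
  p0 * w0 + dotp p (w0 *: f x a + gsum x w) + pi * enorm w - lam * le x w0 w a.

Definition Wset : set (R * 'rV[R]_m) :=
  [set z | 0 <= z.1 /\ Ccone z.2 /\ z.1 + enorm z.2 = 1].

Definition Hmax (x : 'rV[R]_n) (p0 : R) (p : 'rV[R]_n) (pi lam : R) : R :=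
  sup [set h | exists z a, Wset z /\ A a /\ h = Hfun x p0 p pi lam z.1 z.2 a].

Definition Hdr (x : 'rV[R]_n) (p0 : R) (p : 'rV[R]_n) (lam : R) : R :=
  sup [set h | exists a, A a /\ h = p0 + dotp p (f x a) - lam * l0 x a].

Definition Himp (x : 'rV[R]_n) (p : 'rV[R]_n) (pi lam : R) : R :=
  sup [set h | exists w, Ccone w /\ enorm w = 1 /\
                 h = dotp p (gsum x w) + pi - lam * l1 x w].

(* canonical extremal (S,w0,w,alpha,y0,y,beta) with multiplier (p0,p,pi,lam),
   for target T, cost Psi, bound K and initial point xc *)
Definition canonical_extremal (T : set 'rV[R]_(1 + n)) (Psi : 'rV[R]_(1 + n) -> R)
  (K : \bar R) (xc : 'rV[R]_n)
  (S : R) (w0 : R -> R) (w : R -> 'rV[R]_m) (alpha : R -> 'rV[R]_q)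
  (y0 : R -> R) (y : R -> 'rV[R]_n) (beta : R -> R)
  (p0 : R) (p : R -> 'rV[R]_n) (pi lam : R) : Prop :=
  [/\
   (0 < S /\
       measurable_fun `[0, S]%classic w0 /\ meas_vec S w /\ meas_vec S alpha /\
       ess_bounded S w0 /\ ess_bounded S w /\ ess_bounded S alpha /\
       ae_on S (fun s => 0 <= w0 s /\ Ccone (w s) /\ A (alpha s)) /\
       exists2 c : R, 0 < c & ae_on S (fun s => c <= w0 s + enorm (w s))),
   ae_on S (fun s => w0 s + enorm (w s) = 1),
   (AC_sol S y0 w0 /\
       AC_sol S y (fun s => w0 s *: f (y s) (alpha s) + gsum (y s) (w s)) /\
       AC_sol S beta (fun s => enorm (w s)) /\
       y0 0 = 0 /\ y 0 = xc /\ beta 0 = 0),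
   [/\ pi <= 0, 0 <= lam,
       ~ (p0 = 0 /\ (forall s, `[0, S]%classic s -> p s = 0) /\ lam = 0),
       exists G, boltyanski_cone T (pack (y0 S) (y S)) G /\
         exists2 gam, polar G gam &
           pack p0 (p S) = - (lam *: grad Psi (pack (y0 S) (y S))) - gam &
       ((beta S)%:E < K)%E -> pi = 0] &
   [/\ AC_sol S p (fun s =>
         - grad (fun x => Hfun x p0 (p s) pi lam (w0 s) (w s) (alpha s)) (y s)),
       ae_on S (fun s => Hfun (y s) p0 (p s) pi lam (w0 s) (w s) (alpha s)
                         = Hmax (y s) p0 (p s) pi lam) &
       forall s, `[0, S]%classic s -> Hmax (y s) p0 (p s) pi lam = 0]].

End Hamiltonians.

Arguments evec {R k} j.

(* Main.v *)
Require Import Defs.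
From HB Require Import structures.
From mathcomp Require Import all_boot all_order all_algebra.
From mathcomp Require Import all_classical all_reals all_analysis.
From mathcomp Require Import ring lra.
Import Order.TTheory GRing.Theory Num.Theory numFieldNormedType.Exports.
Local Open Scope classical_set_scope.
Local Open Scope ring_scope.

Set Implicit Arguments. Unset Strict Implicit. Unset Printing Implicit Defensive.


Lemma dotpD (R : realType) k (p u v : 'rV[R]_k) : dotp p (u + v) = dotp p u + dotp p v.
Proof. by rewrite /dotp -big_split; apply: eq_bigr => i _; rewrite mxE mulrDr. Qed.

Lemma dotpZ (R : realType) k (p u : 'rV[R]_k) r : dotp p (r *: u) = r * dotp p u.
Proof. by rewrite /dotp mulr_sumr; apply: eq_bigr => i _; rewrite mxE mulrCA. Qed.

Lemma dotp0 (R : realType) k (p : 'rV[R]_k) : dotp p 0 = 0.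
Proof. by rewrite -(scale0r (0 : 'rV[R]_k)) dotpZ mul0r. Qed.

Lemma dotp_ge0 (R : realType) k (v : 'rV[R]_k) : 0 <= dotp v v.
Proof. by apply: sumr_ge0 => i _; rewrite -expr2 sqr_ge0. Qed.

Lemma enorm_ge0 (R : realType) k (v : 'rV[R]_k) : 0 <= enorm v.
Proof. exact: sqrtr_ge0. Qed.

Lemma enorm0 (R : realType) k : enorm (0 : 'rV[R]_k) = 0.
Proof. by rewrite /enorm dotp0 sqrtr0. Qed.

Lemma enormZ (R : realType) k (v : 'rV[R]_k) r : 0 <= r -> enorm (r *: v) = r * enorm v.
Proof.
move=> r0; rewrite /enorm.
have -> : dotp (r *: v) (r *: v) = r ^+ 2 * dotp v v.
  by rewrite /dotp mulr_sumr; apply: eq_bigr => i _; rewrite !mxE expr2; ring.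
by rewrite sqrtrM ?sqr_ge0 // sqrtr_sqr ger0_norm.
Qed.

Lemma enorm_eq0 (R : realType) k (v : 'rV[R]_k) : enorm v = 0 -> v = 0.
Proof.
move=> /eqP; rewrite sqrtr_eq0 => h.
have h0 : dotp v v = 0 by apply/eqP; rewrite eq_le h dotp_ge0.
have := h0; rewrite /dotp => /eqP; rewrite psumr_eq0; last by move=> i _; rewrite -expr2 sqr_ge0.
move=> /allP H; apply/matrixP => i j; rewrite mxE ord1.
have /H : j \in index_enum 'I_k by rewrite mem_index_enum.
by rewrite /= mulf_eq0 orbb => /eqP.
Qed.

Lemma enorm_gt0 (R : realType) k (v : 'rV[R]_k) : v != 0 -> 0 < enorm v.
Proof.
move=> vn0; rewrite lt_neqAle enorm_ge0 andbT eq_sym; apply/eqP => /enorm_eq0 h.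
by rewrite h eqxx in vn0.
Qed.

Lemma gsum0 (R : realType) n m1 m2 (g : 'I_(m1 + m2) -> 'rV[R]_n -> 'rV[R]_n) x : gsum g x 0 = 0.
Proof. by rewrite /gsum big1 // => i _; rewrite mxE scale0r. Qed.

Lemma gsumZ (R : realType) n m1 m2 (g : 'I_(m1 + m2) -> 'rV[R]_n -> 'rV[R]_n) x r w :
  gsum g x (r *: w) = r *: gsum g x w.
Proof. by rewrite /gsum scaler_sumr; apply: eq_bigr => i _; rewrite mxE scalerA. Qed.

Lemma Ccone0 (R : realType) m1 m2 (C1 : set 'rV[R]_m1) (C2 : set 'rV[R]_m2) :
  is_cone C1 -> is_cone C2 -> Ccone C1 C2 0.
Proof.
move=> [h1 _] [h2 _]; split.
  by have -> : lsubmx (0 : 'rV[R]_(m1 + m2)) = 0 by apply/matrixP => i j; rewrite !mxE.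
by have -> : rsubmx (0 : 'rV[R]_(m1 + m2)) = 0 by apply/matrixP => i j; rewrite !mxE.
Qed.

Lemma CconeZ (R : realType) m1 m2 (C1 : set 'rV[R]_m1) (C2 : set 'rV[R]_m2) r w :
  is_cone C1 -> is_cone C2 -> 0 <= r -> Ccone C1 C2 w -> Ccone C1 C2 (r *: w).
Proof.
move=> [_ h1] [_ h2] r0 [c1 c2]; split.
  have -> : lsubmx (r *: w) = r *: lsubmx w by apply/matrixP => i j; rewrite !mxE.
  exact: h1.
have -> : rsubmx (r *: w) = r *: rsubmx w by apply/matrixP => i j; rewrite !mxE.
exact: h2.
Qed.


Lemma entry_le (R : realType) k (v : 'rV[R]_k) i : `|v 0 i| <= `|v|.
Proof. by rewrite [leRHS]/Num.norm /= mx_normrE; apply/bigmax_geP; right; exists (0, i). Qed.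

Lemma norm_le_enorm (R : realType) k (v : 'rV[R]_k) : `|v| <= enorm v.
Proof.
rewrite [leLHS]/Num.norm /= mx_normrE; apply: bigmax_le => [|[i j] _]; first exact: enorm_ge0.
rewrite ord1 /= /enorm -sqrtr_sqr ler_sqrt; last exact: dotp_ge0.
rewrite /dotp (bigD1 j) //= -expr2 lerDl; by apply: sumr_ge0 => k0 _; rewrite -expr2 sqr_ge0.
Qed.

Lemma sum_le (R : realType) k (a b : 'I_k -> R) M : (forall i, `|b i| <= M) ->
  \sum_(i < k) a i * b i <= \sum_(i < k) `|a i| * M.
Proof.
move=> h; apply: ler_sum => i _; apply: le_trans (ler_norm _) _.
by rewrite normrM; apply: ler_wpM2l.
Qed.

Lemma dotp_gsum (R : realType) n m1 m2 (g : 'I_(m1 + m2) -> 'rV[R]_n -> 'rV[R]_n) x P v :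
  dotp P (gsum g x v) = \sum_(i < m1 + m2) v 0 i * dotp P (g i x).
Proof.
rewrite /dotp /gsum.
transitivity (\sum_(j < n) \sum_(i < m1 + m2) P 0 j * (v 0 i * g i x 0 j)).
  by apply: eq_bigr => j _; rewrite summxE mulr_sumr; apply: eq_bigr => i _; rewrite mxE.
rewrite exchange_big; apply: eq_bigr => i _; rewrite mulr_sumr.
by apply: eq_bigr => j _; rewrite mulrCA.
Qed.

Lemma lim_const (R : realType) (F : R -> R) (w0 c L : R) : 0 <= w0 ->
  (forall r, 0 < r -> F r = c) ->
  F @ within [set r : R | 0 < r] (w0^') --> L -> L = c.
Proof.
move=> w00 hF hL.
have h1 : F @ w0^'+ --> L.
  apply: cvg_trans hL; apply: cvg_app.
  move=> B hB.
  have hB' : nbhs w0 (fun y => y != w0 -> 0 < y -> B y) by exact: hB.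
  suff : nbhs w0 (fun y => w0 < y -> B y) by [].
  apply: filterS hB' => y h wy; apply: h; first by rewrite gt_eqF.
  by apply: le_lt_trans wy.
have h2 : F @ w0^'+ --> c.
  have e : {near w0^'+, (fun=> c) =1 F}.
    by apply: filterS (nbhs_right_gt w0) => r wr; rewrite hF //; apply: le_lt_trans wr.
  apply: cvg_trans (near_eq_cvg e) _; exact: cvg_cst.
exact: (cvg_unique _ h1 h2).
Qed.

Lemma compact_bound (R : realType) (T : topologicalType) (V : normedModType R)
  (E K : set T) (h : T -> V) :
  compact K -> K `<=` E -> {within E, continuous h} ->
  exists M : R, forall z, K z -> `|h z| <= M.
Proof.
move=> cK KE hc.
have hc' : {within K, continuous h} by apply: continuous_subspaceW hc.
have /compact_bounded [M [_ hM]] := continuous_compact hc' cK.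
by exists (M + 1) => z Kz; apply: hM; [lra | exists z].
Qed.

Lemma boundD (R : realType) n q (A : set 'rV[R]_q)
  (f : 'rV[R]_n -> 'rV[R]_q -> 'rV[R]_n) (l0 : 'rV[R]_n -> 'rV[R]_q -> R) x p0 P lam :
  compact A ->
  {within [set z : 'rV[R]_n * 'rV[R]_q | A z.2], continuous (fun z => f z.1 z.2)} ->
  {within [set z : 'rV[R]_n * 'rV[R]_q | A z.2], continuous (fun z => l0 z.1 z.2)} ->
  exists M, forall a, A a -> p0 + dotp P (f x a) - lam * l0 x a <= M.
Proof.
move=> cA hf hl.
have cK : compact ([set x] `*` A) := compact_setX (@compact_set1 _ x) cA.
have KE : [set x] `*` A `<=` [set z : 'rV[R]_n * 'rV[R]_q | A z.2] by move=> z [].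
have [M1 hM1] := compact_bound cK KE hf.
have [M2 hM2] := compact_bound cK KE hl.
exists (`|p0| + \sum_(i < n) `|P 0 i| * M1 + `|lam| * M2) => a Aa.
have K1 : ([set x] `*` A) (x, a) by split.
have e1 : p0 <= `|p0| := ler_norm _.
have e2 : dotp P (f x a) <= \sum_(i < n) `|P 0 i| * M1.
  apply: sum_le => i; apply: le_trans (entry_le _ _) _; exact: (hM1 _ K1).
have e3 : - (lam * l0 x a) <= `|lam| * M2.
  apply: le_trans (ler_norm _) _; rewrite normrN normrM; apply: ler_wpM2l => //.
  exact: (hM2 _ K1).
lra.
Qed.

Lemma closed_Ccone (R : realType) m1 m2 (C1 : set 'rV[R]_m1) (C2 : set 'rV[R]_m2) :
  closed C1 -> closed C2 -> closed (Ccone C1 C2).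
Proof.
move=> c1 c2.
have -> : Ccone C1 C2 = lsubmx @^-1` C1 `&` rsubmx @^-1` C2 by [].
apply: closedI; apply: preimage_closed => // z _.
  exact: continuous_lsubmx.
exact: continuous_rsubmx.
Qed.

Lemma boundI (R : realType) n m1 m2 (C1 : set 'rV[R]_m1) (C2 : set 'rV[R]_m2)
  (g : 'I_(m1 + m2) -> 'rV[R]_n -> 'rV[R]_n) (l1 : 'rV[R]_n -> 'rV[R]_(m1 + m2) -> R)
  (l1hat : 'rV[R]_n -> R -> 'rV[R]_(m1 + m2) -> R) x P pi lam :
  closed C1 -> closed C2 ->
  (forall v, Ccone C1 C2 v -> l1 x v = l1hat x 1 v) ->
  {within [set z : 'rV[R]_n * (R * 'rV[R]_(m1 + m2)) |
                      0 <= z.2.1 /\ Ccone C1 C2 z.2.2],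
               continuous (fun z => l1hat z.1 z.2.1 z.2.2)} ->
  exists M, forall v, Ccone C1 C2 v -> enorm v = 1 ->
      dotp P (gsum g x v) + pi - lam * l1 x v <= M.
Proof.
move=> c1 c2 hl hc.
set K' := [set v : 'rV[R]_(m1 + m2) | Ccone C1 C2 v /\ `|v| <= 1].
have cK' : compact K'.
  apply: bounded_closed_compact.
    exists 1; split; first exact: num_real.
    by move=> M M1 v [_ hv]; apply: le_trans hv _; apply: ltW.
  apply: closedI; first exact: closed_Ccone.
  apply: (@preimage_closed _ _ (Num.norm : 'rV[R]_(m1 + m2) -> R) [set r : R | r <= 1]);
    last exact: closed_le.
  by move=> z _; exact: norm_continuous.
have cK : compact ([set x] `*` ([set (1:R)] `*` K')).
  exact: compact_setX (@compact_set1 _ x) (compact_setX (@compact_set1 _ (1:R)) cK').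
have KE : [set x] `*` ([set (1:R)] `*` K') `<=`
   [set z : 'rV[R]_n * (R * 'rV[R]_(m1 + m2)) | 0 <= z.2.1 /\ Ccone C1 C2 z.2.2].
  by move=> [z1 [z21 z22]] [/= _ [/= -> [Cz _]]].
have [M2 hM2] := compact_bound cK KE hc.
exists (\sum_(i < m1 + m2) `|dotp P (g i x)| * 1 + pi + `|lam| * M2) => v Cv nv.
have Kv : ([set x] `*` ([set (1:R)] `*` K')) (x, (1, v)).
  by split => //; split => //; split => //; rewrite -nv norm_le_enorm.
have e2 : dotp P (gsum g x v) <= \sum_(i < m1 + m2) `|dotp P (g i x)| * 1.
  rewrite dotp_gsum; under eq_bigr do rewrite mulrC.
  by apply: sum_le => i; rewrite -nv; apply: le_trans (entry_le _ _) (norm_le_enorm _).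
have e3 : - (lam * l1 x v) <= `|lam| * M2.
  apply: le_trans (ler_norm _) _; rewrite normrN normrM; apply: ler_wpM2l => //.
  by rewrite hl //; exact: (hM2 _ Kv).
lra.
Qed.


Lemma core (R : realType) n m1 m2 q (C1 : set 'rV[R]_m1) (C2 : set 'rV[R]_m2)
  (A : set 'rV[R]_q) (f : 'rV[R]_n -> 'rV[R]_q -> 'rV[R]_n)
  (g : 'I_(m1 + m2) -> 'rV[R]_n -> 'rV[R]_n)
  (l0 : 'rV[R]_n -> 'rV[R]_q -> R) (l1 : 'rV[R]_n -> 'rV[R]_(m1 + m2) -> R)
  (l1hat : 'rV[R]_n -> R -> 'rV[R]_(m1 + m2) -> R)
  (x : 'rV[R]_n) (p0 : R) (P : 'rV[R]_n) (pi lam w0v : R) (wv : 'rV[R]_(m1 + m2))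
  (av : 'rV[R]_q) :
  is_cone C1 -> is_cone C2 ->
  (forall w0 w, 0 <= w0 -> Ccone C1 C2 w -> l1hat x w0 w = l1 x w) ->
  (forall r w, 0 < r -> Ccone C1 C2 w -> l1 x (r *: w) = r * l1 x w) ->
  (exists M, forall a, A a -> p0 + dotp P (f x a) - lam * l0 x a <= M) ->
  (exists M, forall v, Ccone C1 C2 v -> enorm v = 1 ->
      dotp P (gsum g x v) + pi - lam * l1 x v <= M) ->
  0 <= w0v -> Ccone C1 C2 wv -> A av -> w0v + enorm wv = 1 ->
  Hfun f g l0 l1hat x p0 P pi lam w0v wv av = Hmax C1 C2 A f g l0 l1hat x p0 P pi lam ->
  Hmax C1 C2 A f g l0 l1hat x p0 P pi lam = 0 ->
    [/\ Hfun f g l0 l1hat x p0 P pi lam w0v wv av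
          = Hmax C1 C2 A f g l0 l1hat x p0 P pi lam,
        Hmax C1 C2 A f g l0 l1hat x p0 P pi lam
          = Num.max (Hdr A f l0 x p0 P lam)
                    (Himp C1 C2 g l1 x P pi lam),
        Num.max (Hdr A f l0 x p0 P lam)
                (Himp C1 C2 g l1 x P pi lam) = 0,
        w0v * (p0 + dotp P (f x av) - lam * l0 x av) = 0
      & [/\ dotp P (gsum g x wv) + pi * enorm wv
              - lam * l1 x wv = 0,
            (Hdr A f l0 x p0 P lam < 0 ->
               [/\ w0v = 0,
                   dotp P (gsum g x wv) + pi - lam * l1 x wv
                     = Himp C1 C2 g l1 x P pi lam &
                   Himp C1 C2 g l1 x P pi lam = 0]) &
            (Himp C1 C2 g l1 x P pi lam < 0 ->
               [/\ wv = 0,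
                   p0 + dotp P (f x av) - lam * l0 x av
                     = Hdr A f l0 x p0 P lam &
                   Hdr A f l0 x p0 P lam = 0])]].
Proof.
move=> cC1 cC2 hl1hat hhom [MD hMD] [MI hMI] w0v0 Cwv Aav wsum hHv hH0.
set D := fun a => p0 + dotp P (f x a) - lam * l0 x a.
set I := fun v => dotp P (gsum g x v) + pi - lam * l1 x v.
set J := fun w => dotp P (gsum g x w) + pi * enorm w - lam * l1 x w.
have C0 : Ccone C1 C2 0 by exact: Ccone0.
have l10 : l1 x 0 = 0.
  have two : (0:R) < 2 by lra.
  have := hhom 2 0 two C0; rewrite scaler0 => /eqP.
  by rewrite -subr_eq0 -{1}(mul1r (l1 x 0)) -mulrBl mulf_eq0 => /orP [/eqP|/eqP //]; lra.
have J0 : J 0 = 0 by rewrite /J gsum0 dotp0 enorm0 l10; ring.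
have hdec : forall z a, Wset C1 C2 z -> A a ->
    Hfun f g l0 l1hat x p0 P pi lam z.1 z.2 a = z.1 * D a + J z.2.
  move=> [z1 z2] a [/= z10 [Cz2 _]] Aa.
  by rewrite /Hfun /Defs.le hl1hat // dotpD dotpZ /D /J; ring.
have IJ : forall v, enorm v = 1 -> J v = I v by move=> v hv; rewrite /J /I hv mulr1.
have hJb : forall M, (forall v, Ccone C1 C2 v -> enorm v = 1 -> I v <= M) ->
    forall w, Ccone C1 C2 w -> J w <= enorm w * M.
  move=> M hM w Cw; have [->|wn0] := eqVneq w 0; first by rewrite J0 enorm0 mul0r.
  have r0 := enorm_gt0 wn0; set r := enorm w.
  have ew : w = r *: (r^-1 *: w) by rewrite scalerA divff ?scale1r // gt_eqF.
  have Cv : Ccone C1 C2 (r^-1 *: w) by apply: CconeZ => //; rewrite invr_ge0 ltW.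
  have nv : enorm (r^-1 *: w) = 1 by rewrite enormZ ?invr_ge0 ?(ltW r0) // mulVf // gt_eqF.
  rewrite {1}ew /J gsumZ dotpZ hhom // (enormZ _ (ltW r0)) nv.
  have := hM _ Cv nv; rewrite /I => h.
  have hh : 0 <= r * (M - (dotp P (gsum g x (r^-1 *: w)) + pi - lam * l1 x (r^-1 *: w))).
    by apply: mulr_ge0; [exact: ltW | rewrite subr_ge0].
  rewrite -/r; clearbody r; lra.
set SH := [set h | exists z a, Wset C1 C2 z /\ A a /\ h = Hfun f g l0 l1hat x p0 P pi lam z.1 z.2 a].
set SD := [set h | exists a, A a /\ h = p0 + dotp P (f x a) - lam * l0 x a].
set SI := [set h | exists w, Ccone C1 C2 w /\ enorm w = 1 /\
                 h = dotp P (gsum g x w) + pi - lam * l1 x w].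
have eH : Hmax C1 C2 A f g l0 l1hat x p0 P pi lam = sup SH by [].
have eD : Hdr A f l0 x p0 P lam = sup SD by [].
have eI : Himp C1 C2 g l1 x P pi lam = sup SI by [].
have W10 : Wset C1 C2 (1, 0) by split => //=; split => //; rewrite enorm0 addr0.
have W0v : forall v, Ccone C1 C2 v -> enorm v = 1 -> Wset C1 C2 (0, v).
  by move=> v Cv nv; split => //=; split => //; rewrite nv add0r.
have SHub : ubound SH (Num.max MD MI).
  move=> h [z [a [Wz [Aa ->]]]]; rewrite hdec //.
  case: Wz => z10 [Cz2 zs].
  have h1 : z.1 * D a <= z.1 * Num.max MD MI.
    by apply: ler_wpM2l => //; apply: le_trans (hMD _ Aa) _; rewrite le_max lexx.
  have h2 : J z.2 <= enorm z.2 * Num.max MD MI.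
    by apply: hJb => // v Cv nv; apply: le_trans (hMI _ Cv nv) _; rewrite le_max lexx orbT.
  by apply: le_trans (lerD h1 h2) _; rewrite -mulrDl zs mul1r.

have SHne : SH !=set0.
  by exists (Hfun f g l0 l1hat x p0 P pi lam 1 0 av); exists (1, 0), av.
have hasH : has_sup SH by split => //; exists (Num.max MD MI).
have DleH : forall a, A a -> D a <= Hmax C1 C2 A f g l0 l1hat x p0 P pi lam.
  move=> a Aa; rewrite eH; apply: (sup_upper_bound hasH).
  by exists (1, 0), a; split => //; split => //; rewrite hdec //= J0 mul1r addr0.
have IleH : forall v, Ccone C1 C2 v -> enorm v = 1 ->
    I v <= Hmax C1 C2 A f g l0 l1hat x p0 P pi lam.
  move=> v Cv nv; rewrite eH; apply: (sup_upper_bound hasH).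
  by exists (0, v), av; split; [exact: W0v|split => //]; rewrite hdec ?IJ //= ?mul0r ?add0r //; exact: W0v.
have SDne : SD !=set0 by exists (D av), av.
have hasD : has_sup SD by split => //; exists MD => h [a [Aa ->]]; exact: hMD.
have DleHdr : forall a, A a -> D a <= Hdr A f l0 x p0 P lam.
  by move=> a Aa; rewrite eD; apply: (sup_upper_bound hasD); exists a.
have Hdr0 : Hdr A f l0 x p0 P lam <= 0.
  by rewrite eD; apply: ge_sup => // h [a [Aa ->]]; rewrite -hH0; exact: DleH.
have IleHimp : forall v, Ccone C1 C2 v -> enorm v = 1 -> I v <= Himp C1 C2 g l1 x P pi lam.
  move=> v Cv nv; rewrite eI.
  have hasI : has_sup SI.
    by split; [exists (I v), v | exists MI => h [u [Cu [nu ->]]]; exact: hMI].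
  by apply: (sup_upper_bound hasI); exists v.
have Himp0 : Himp C1 C2 g l1 x P pi lam <= 0.
  rewrite eI; case: (pselect (SI !=set0)) => [ne|e].
    by apply: ge_sup => // h [v [Cv [nv ->]]]; rewrite -hH0; exact: IleH.
  have -> : SI = set0 by apply/seteqP; split => // h Sh; exfalso; apply: e; exists h.
  by rewrite sup0.
set mx := Num.max (Hdr A f l0 x p0 P lam) (Himp C1 C2 g l1 x P pi lam).
have Hle : Hmax C1 C2 A f g l0 l1hat x p0 P pi lam <= mx.
  rewrite eH; apply: ge_sup => // h [z [a [Wz [Aa ->]]]]; rewrite hdec //.
  case: Wz => z10 [Cz2 zs].
  have h1 : z.1 * D a <= z.1 * mx.
    by apply: ler_wpM2l => //; apply: le_trans (DleHdr _ Aa) _; rewrite le_max lexx.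
  have h2 : J z.2 <= enorm z.2 * mx.
    by apply: hJb => // v Cv nv; apply: le_trans (IleHimp _ Cv nv) _; rewrite le_max lexx orbT.
  by apply: le_trans (lerD h1 h2) _; rewrite -mulrDl zs mul1r.
have emax : mx = 0.
  by apply/eqP; rewrite eq_le -{2}hH0 Hle andbT ge_max Hdr0 Himp0.
have hact : w0v * D av + J wv = 0.
  by rewrite -hH0 -hHv (hdec (w0v, wv)) //; split => //; split.
have a1 : w0v * D av <= 0 by apply: mulr_ge0_le0 => //; apply: le_trans (DleHdr _ Aav) Hdr0.
have a2 : J wv <= 0.
  apply: le_trans (hJb _ IleHimp _ Cwv) _; apply: mulr_ge0_le0 => //; exact: enorm_ge0.
have e1 : w0v * D av = 0 by lra.
have e2 : J wv = 0 by lra.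
split => //; first by rewrite hH0 emax.
split => //.
  move=> Hdrlt.
  have Dlt : D av < 0 by apply: le_lt_trans (DleHdr _ Aav) Hdrlt.
  have w00 : w0v = 0.
    by move/eqP: e1; rewrite mulf_eq0 => /orP [/eqP //|/eqP h]; move: Dlt; rewrite h ltxx.
  have nw : enorm wv = 1 by move: wsum; rewrite w00 add0r.
  have Hi0 : Himp C1 C2 g l1 x P pi lam = 0.
    move: emax; rewrite /mx; have [h|h] := leP (Hdr A f l0 x p0 P lam) (Himp C1 C2 g l1 x P pi lam).
      by [].
    by move=> h'; move: Hdrlt; rewrite h' ltxx.
  by split => //; rewrite Hi0 -e2 (IJ _ nw).
move=> Himplt.
have wv0 : wv = 0.
  apply/eqP; apply/negPn/negP => wn0.
  have := hJb _ IleHimp _ Cwv; rewrite e2 => h.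
  have : enorm wv * Himp C1 C2 g l1 x P pi lam < 0 by rewrite pmulr_rlt0 // enorm_gt0.
  by move=> h2; move: (le_lt_trans h h2); rewrite ltxx.
have w01 : w0v = 1 by move: wsum; rewrite wv0 enorm0 addr0.
have Da0 : D av = 0 by move: e1; rewrite w01 mul1r.
have Hd0 : Hdr A f l0 x p0 P lam = 0.
  move: emax; rewrite /mx; have [h|h] := leP (Hdr A f l0 x p0 P lam) (Himp C1 C2 g l1 x P pi lam).
    by move=> h'; move: Himplt; rewrite h' ltxx.
  by [].
by split => //; rewrite Hd0 -Da0.
Qed.

Unset Implicit Arguments. Set Strict Implicit.
Theorem mainTheorem2 (R : realType) (n m1 m2 q : nat)
  (* standing hypotheses *)
  (Hn : (0 < n)%N) (Hm : (0 < m1 + m2)%N) (Hq : (0 < q)%N)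
  (T : set 'rV[R]_(1 + n))
  (HTcl : closed T) (HTpos : forall z, T z -> exists t x, 0 <= t /\ z = pack t x)
  (A : set 'rV[R]_q) (HAc : compact A)
  (C1 : set 'rV[R]_m1) (C2 : set 'rV[R]_m2)
  (HC1 : closed C1 /\ is_cone C1 /\ forall (i : 'I_m1) (r : R), C1 (r *: evec i))
  (HC2 : closed C2 /\ is_cone C2 /\
         forall v : 'rV[R]_m2, (forall r : R, C2 (r *: v)) -> v = 0)
  (f : 'rV[R]_n -> 'rV[R]_q -> 'rV[R]_n)
  (Hf : {within [set z : 'rV[R]_n * 'rV[R]_q | A z.2],
           continuous (fun z => f z.1 z.2)} /\
        cont_xpartials [set z : 'rV[R]_n * 'rV[R]_q | A z.2] f)
  (g : 'I_(m1 + m2) -> 'rV[R]_n -> 'rV[R]_n) (Hg : forall i, C1fun (g i))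
  (l0 : 'rV[R]_n -> 'rV[R]_q -> R)
  (Hl0 : {within [set z : 'rV[R]_n * 'rV[R]_q | A z.2],
            continuous (fun z => l0 z.1 z.2)} /\
         cont_xpartials [set z : 'rV[R]_n * 'rV[R]_q | A z.2] l0)
  (l1 : 'rV[R]_n -> 'rV[R]_(m1 + m2) -> R)
  (l1hat : 'rV[R]_n -> R -> 'rV[R]_(m1 + m2) -> R)
  (Hl1hat_lim : forall x (w0 : R) w, 0 <= w0 -> Ccone C1 C2 w ->
      (fun r => r * l1 x (r^-1 *: w)) @ within [set r : R | 0 < r] (w0^')
        --> l1hat x w0 w)
  (Hl1hat : {within [set z : 'rV[R]_n * (R * 'rV[R]_(m1 + m2)) |
                      0 <= z.2.1 /\ Ccone C1 C2 z.2.2],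
               continuous (fun z => l1hat z.1 z.2.1 z.2.2)} /\
            cont_xpartials [set z : 'rV[R]_n * (R * 'rV[R]_(m1 + m2)) |
                              0 <= z.2.1 /\ Ccone C1 C2 z.2.2]
              (fun x y => l1hat x y.1 y.2))
  (Psi : 'rV[R]_(1 + n) -> R) (HPsi : C1fun Psi)
  (K : \bar R) (HK : (0 < K)%E) (xc : 'rV[R]_n)
  (* l1(x,.) positively 1-homogeneous *)
  (Hhom : forall x (r : R) w, 0 < r -> Ccone C1 C2 w -> l1 x (r *: w) = r * l1 x w)
  (* the canonical extremal and its multiplier *)
  (S : R) (w0 : R -> R) (w : R -> 'rV[R]_(m1 + m2)) (alpha : R -> 'rV[R]_q)
  (y0 : R -> R) (y : R -> 'rV[R]_n) (beta : R -> R)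
  (p0 : R) (p : R -> 'rV[R]_n) (pi lam : R)
  (Hext : canonical_extremal C1 C2 A f g l0 l1hat T Psi K xc
            S w0 w alpha y0 y beta p0 p pi lam) :
  exists N : set R, leb_null N /\ N `<=` `[0, S]%classic /\
    forall s, `[0, S]%classic s -> ~ N s ->
    [/\ Hfun f g l0 l1hat (y s) p0 (p s) pi lam (w0 s) (w s) (alpha s)
          = Hmax C1 C2 A f g l0 l1hat (y s) p0 (p s) pi lam,
        Hmax C1 C2 A f g l0 l1hat (y s) p0 (p s) pi lam
          = Num.max (Hdr A f l0 (y s) p0 (p s) lam)
                    (Himp C1 C2 g l1 (y s) (p s) pi lam),
        Num.max (Hdr A f l0 (y s) p0 (p s) lam)
                (Himp C1 C2 g l1 (y s) (p s) pi lam) = 0,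
        w0 s * (p0 + dotp (p s) (f (y s) (alpha s)) - lam * l0 (y s) (alpha s)) = 0
      & [/\ dotp (p s) (gsum g (y s) (w s)) + pi * enorm (w s)
              - lam * l1 (y s) (w s) = 0,
            (Hdr A f l0 (y s) p0 (p s) lam < 0 ->
               [/\ w0 s = 0,
                   dotp (p s) (gsum g (y s) (w s)) + pi - lam * l1 (y s) (w s)
                     = Himp C1 C2 g l1 (y s) (p s) pi lam &
                   Himp C1 C2 g l1 (y s) (p s) pi lam = 0]) &
            (Himp C1 C2 g l1 (y s) (p s) pi lam < 0 ->
               [/\ w s = 0,
                   p0 + dotp (p s) (f (y s) (alpha s)) - lam * l0 (y s) (alpha s)
                     = Hdr A f l0 (y s) p0 (p s) lam &
                   Hdr A f l0 (y s) p0 (p s) lam = 0])]].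
Proof.
case: Hext => [[S0 [_ [_ [_ [_ [_ [_ [aeA _]]]]]]]] aeC _ _ [_ aeH Hmax0]].
case: aeA => N1 [[mN1 N10] h1].
case: aeC => N2 [[mN2 N20] h2].
case: aeH => N3 [[mN3 N30] h3].
have cC1 := HC1.2.1; have cC2 := HC2.2.1.
have hl1hat : forall x w0 w, 0 <= w0 -> Ccone C1 C2 w -> l1hat x w0 w = l1 x w.
  move=> x w0' w' w00 Cw.
  apply: (lim_const w00 _ (Hl1hat_lim x w0' w' w00 Cw)) => r r0.
  by rewrite Hhom ?invr_gt0 // mulrA mulfV ?gt_eqF // mul1r.
have mI : measurable (`[0, S]%classic : set R) by exact: measurable_itv.
have mU : measurable (N1 `|` N2 `|` N3) by apply: measurableU => //; exact: measurableU.
exists (`[0, S]%classic `&` (N1 `|` N2 `|` N3)).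
split; [split|split].
- exact: measurableI.
- have nU : (@lebesgue_measure R) (N1 `|` N2 `|` N3) = 0%E.
    apply: null_set_setU => //; first exact: measurableU.
    exact: null_set_setU.
  apply/eqP; rewrite eq_le measure_ge0 andbT -nU; apply: le_measure.
  + by rewrite inE; exact: measurableI.
  + by rewrite inE.
  + by move=> z [].
- by move=> z [].
move=> s Is Ns.
have nN1 : ~ N1 s by move=> h; apply: Ns; split => //; left; left.
have nN2 : ~ N2 s by move=> h; apply: Ns; split => //; left; right.
have nN3 : ~ N3 s by move=> h; apply: Ns; split => //; right.
have [w00 [Cw As]] := h1 s Is nN1.
apply: core => //.
- by move=> w0' w' w00' Cw'; exact: hl1hat.
- by move=> r w' r0 Cw'; exact: Hhom.
- exact: boundD HAc Hf.1 Hl0.1.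
- apply: boundI HC1.1 HC2.1 _ Hl1hat.1 => v Cv.
  by rewrite hl1hat.
- exact: h2.
- exact: h3.
- exact: Hmax0.
Qed.
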